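(* Let $p$ be an odd prime and $F$ a positive integer with $p\mid F$. For all $s\in\mathbb Z_p$ and $a\in\mathbb Z_p^\times$, $$H_p(s,a,F)=H_p(s,F-a,F),$$ where $H_p(s,a,F)=\langle a\rangle^{1-s}\sum_{k=0}^\infty\binom{1-s}{k}\left(\frac Fa\right)^kE_k$.
   Context: The Euler numbers $E_k$ are defined by $\frac{2}{e^t+1}=\sum_{k\ge0}E_k\frac{t^k}{k!}$. For $a\in\mathbb Z_p^\times$, $\omega(a)$ is the Teichmüller character (the $(p-1)$-st root of unity congruent to $a$ mod $p$) and $\langle a\rangle=\omega^{-1}(a)a$. *)

(* Defs.v *)
(* p-adic integers are modelled as the inverse limit
   Z_p = lim Z/p^n Z: an element is a coherent sequence of integer
   approximations x n (meaningful modulo p^n), and two such sequences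
   denote the same p-adic integer iff they agree modulo p^n for every n. *)
From HB Require Import structures.
From mathcomp Require Import all_boot all_order all_algebra.
Set Implicit Arguments. Unset Strict Implicit. Unset Printing Implicit Defensive.
Import Order.TTheory GRing.Theory Num.Theory.
Local Open Scope ring_scope.

Definition padic := nat -> int.

Definition ppow (p n : nat) : int := (p ^ n)%N%:Z.

Definition coherent (p : nat) (x : padic) : Prop :=
  forall n, (x n.+1 = x n %[mod ppow p n])%Z.

Definition peq (p : nat) (x y : padic) : Prop :=
  forall n, (x n = y n %[mod ppow p n])%Z.

Definition punit (p : nat) (x : padic) : Prop := ~~ (p%:Z %| x 1%N)%Z.

Definition pconst (z : int) : padic := fun _ => z.
Definition padd (x y : padic) : padic := fun n => x n + y n.
Definition psub (x y : padic) : padic := fun n => x n - y n.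
Definition pmul (x y : padic) : padic := fun n => x n * y n.
Definition pexp (x : padic) (k : nat) : padic := fun n => x n ^+ k.

(* Euler numbers E_k, defined by 2/(e^t+1) = sum_k E_k t^k/k!.
   Comparing coefficients of t^n/n! in (e^t + 1) * sum_k E_k t^k/k! = 2 gives
   E_0 = 1 and  2 E_n + sum_{j<n} C(n,j) E_j = 0  for n >= 1. *)
Fixpoint euler_seq (n : nat) : seq rat :=
  match n with
  | 0 => [:: 1]
  | n'.+1 => let s := euler_seq n' in
      rcons s (- (\sum_(j < n'.+1) ('C(n'.+1, j))%:R * s`_j) / 2%:R)
  end.
Definition euler (k : nat) : rat := (euler_seq k)`_k.

(* w = omega(a): the (p-1)-st root of unity in Z_p congruent to a mod p *)
Definition IsTeich (p : nat) (a w : padic) : Prop :=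
  coherent p w /\ peq p (pexp w p.-1) (pconst 1) /\
  (w 1%N = a 1%N %[mod p%:Z])%Z.

(* l = <a> = omega(a)^{-1} a *)
Definition IsAngle (p : nat) (a l : padic) : Prop :=
  exists w, IsTeich p a w /\ coherent p l /\ peq p (pmul w l) a.

(* v = u^x for u in 1 + pZ_p and x in Z_p, defined by p-adic continuity:
   v = lim u^m as the natural numbers m tend p-adically to x *)
Definition IsPow (p : nat) (u x v : padic) : Prop :=
  coherent p v /\
  forall n, exists N, forall m : nat, (m%:Z = x N %[mod ppow p N])%Z ->
    (u n ^+ m = v n %[mod ppow p n])%Z.

Definition IsBinom (p : nat) (x : padic) (k : nat) (c : padic) : Prop :=
  coherent p c /\
  peq p (pmul (pconst (k`!)%:Z) c) (fun n => \prod_(i < k) (x n - i%:Z)).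

Definition IsRat (p : nat) (r : rat) (e : padic) : Prop :=
  coherent p e /\ peq p (pmul (pconst (denq r)) e) (pconst (numq r)).

Definition IsDiv (p : nat) (z : int) (a q : padic) : Prop :=
  coherent p q /\ peq p (pmul a q) (pconst z).

Definition IsSum (p : nat) (c : nat -> padic) (S : padic) : Prop :=
  coherent p S /\
  forall n, exists N, forall M, (N <= M)%N ->
    (\sum_(k < M) c k n = S n %[mod ppow p n])%Z.

Definition IsH (p : nat) (s a : padic) (F : nat) (h : padic) : Prop :=
  exists (l u q S : padic) (bin e : nat -> padic),
    IsAngle p a l /\
    IsPow p l (psub (pconst 1) s) u /\
    IsDiv p F%:Z a q /\
    (forall k, IsBinom p (psub (pconst 1) s) k (bin k)) /\
    (forall k, IsRat p (euler k) (e k)) /\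
    IsSum p (fun k => pmul (pmul (bin k) (pexp q k)) (e k)) S /\
    coherent p h /\
    peq p h (pmul u S).

Example euler_small :
  [/\ euler 0 = 1, euler 1 = - (1 / 2%:R), euler 2 = 0 & euler 3 = 1 / 4%:R].
Proof. by split; apply/eqP; rewrite /euler /= ?big_ord_recr /= ?big_ord0. Qed.

(* Main.v *)
Require Import Defs.
From mathcomp Require Import all_boot all_order all_algebra.
From HB Require Import structures.
From mathcomp Require Import ring lra zify.
From Stdlib Require Import ClassicalEpsilon.

Module Helpers.
Set Implicit Arguments. Unset Strict Implicit. Unset Printing Implicit Defensive.
Import Order.TTheory GRing.Theory Num.Theory.
Local Open Scope ring_scope.

Definition cg (d x y : int) : Prop := (d %| x - y)%Z.

Lemma dvdzD d x y : (d %| x)%Z -> (d %| y)%Z -> (d %| x + y)%Z.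
Proof. exact: rpredD. Qed.

Lemma dvdzN d x : (d %| - x)%Z = (d %| x)%Z.
Proof. by rewrite dvdzE abszN. Qed.

Lemma cgP d x y : (x = y %[mod d])%Z <-> cg d x y.
Proof. rewrite /cg -eqz_mod_dvd; split => [->//|/eqP//]. Qed.

Lemma cg_refl d x : cg d x x.
Proof. by rewrite /cg subrr dvdz0. Qed.

Lemma cg_sym d x y : cg d x y -> cg d y x.
Proof. by rewrite /cg -opprB dvdzN. Qed.

Lemma cg_trans d x y z : cg d x y -> cg d y z -> cg d x z.
Proof.
move=> h1 h2; rewrite /cg (_ : x - z = (x - y) + (y - z)); first exact: dvdzD.
by rewrite addrA subrK.
Qed.

Lemma cg_add d x y x' y' : cg d x x' -> cg d y y' -> cg d (x + y) (x' + y').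
Proof.
move=> h1 h2; rewrite /cg (_ : x + y - (x' + y') = (x - x') + (y - y')).
  exact: dvdzD.
by rewrite opprD addrACA.
Qed.

Lemma cg_opp d x x' : cg d x x' -> cg d (- x) (- x').
Proof. by rewrite /cg -opprD dvdzN. Qed.

Lemma cg_sub d x y x' y' : cg d x x' -> cg d y y' -> cg d (x - y) (x' - y').
Proof. by move=> h1 h2; apply: cg_add => //; apply: cg_opp. Qed.

Lemma cg_mul d x y x' y' : cg d x x' -> cg d y y' -> cg d (x * y) (x' * y').
Proof.
move=> h1 h2; rewrite /cg (_ : x * y - x' * y' = x * (y - y') + (x - x') * y').
  by apply: dvdzD; [apply: dvdz_mull | apply: dvdz_mulr].
by rewrite mulrBr mulrBl addrA subrK.
Qed.

Lemma cg_exp d x x' k : cg d x x' -> cg d (x ^+ k) (x' ^+ k).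
Proof.
move=> h; elim: k => [|k IH]; first exact: cg_refl.
by rewrite !exprS; apply: cg_mul.
Qed.

Lemma cg_sum d k (f g : nat -> int) :
  (forall i, (i < k)%N -> cg d (f i) (g i)) ->
  cg d (\sum_(i < k) f i) (\sum_(i < k) g i).
Proof.
move=> h; elim: k h => [|k IH] h; first by rewrite !big_ord0; exact: cg_refl.
rewrite !big_ord_recr /=; apply: cg_add; last exact: h.
by apply: IH => i /ltnW/h.
Qed.

Lemma cg_dvd d d' x y : (d' %| d)%Z -> cg d x y -> cg d' x y.
Proof. by move=> h1 h2; apply: dvdz_trans h2. Qed.

Lemma cg0 d x : cg d x 0 <-> (d %| x)%Z.
Proof. by rewrite /cg subr0. Qed.

Lemma cg_mulr0 d x y : (d %| x)%Z -> cg d (x * y) 0.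
Proof. by move=> h; apply/cg0; apply: dvdz_mulr. Qed.

Lemma ppow_dvd p m n : (m <= n)%N -> (ppow p m %| ppow p n)%Z.
Proof. by move=> h; rewrite /ppow dvdzE /= dvdn_exp2l. Qed.

Lemma ppowS p n : ppow p n.+1 = ppow p n * p%:Z.
Proof. by rewrite /ppow expnSr PoszM. Qed.

Lemma ppow1 p : ppow p 1 = p%:Z.
Proof. by rewrite /ppow expn1. Qed.

Lemma cg_le p m n x y : (m <= n)%N -> cg (ppow p n) x y -> cg (ppow p m) x y.
Proof. by move=> h; apply: cg_dvd; apply: ppow_dvd. Qed.

Lemma cg_pow0 x y : cg (ppow 0 0) x y.
Proof. by rewrite /cg /ppow expn0 dvd1z. Qed.

Lemma cg_ppow0 p x y : cg (ppow p 0) x y.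
Proof. by rewrite /cg /ppow expn0 dvd1z. Qed.

Lemma coh_le p x m n : coherent p x -> (m <= n)%N -> cg (ppow p m) (x n) (x m).
Proof.
move=> hx; elim: n => [|n IH]; first by rewrite leqn0 => /eqP ->; exact: cg_refl.
rewrite leq_eqVlt => /orP [/eqP ->|]; first exact: cg_refl.
rewrite ltnS => hmn; apply: cg_trans (IH hmn).
by apply: (cg_le hmn); apply/cgP; apply: hx.
Qed.

Lemma peq_cg p x y n : peq p x y -> cg (ppow p n) (x n) (y n).
Proof. by move=> h; apply/cgP; apply: h. Qed.

Lemma coprime_ppow p n c : prime p -> ~~ (p%:Z %| c)%Z -> coprimez (ppow p n) c.
Proof.
move=> pp hc; rewrite coprimezE /ppow /=.
case: n => [|n]; first by rewrite expn0 coprime1n.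
by rewrite coprime_pexpl // prime_coprime // -(dvdzE p%:Z).
Qed.

Lemma cg_cancel p n c x y : prime p -> ~~ (p%:Z %| c)%Z ->
  cg (ppow p n) (c * x) (c * y) -> cg (ppow p n) x y.
Proof.
move=> pp hc; rewrite /cg -mulrBr Gauss_dvdzr //; exact: coprime_ppow.
Qed.

Lemma unit_cg p c c' : cg p%:Z c c' -> ~~ (p%:Z %| c)%Z -> ~~ (p%:Z %| c')%Z.
Proof.
move=> h hc; apply: contra hc => hc'.
have -> : c = (c - c') + c' by rewrite subrK.
exact: dvdzD h hc'.
Qed.

Lemma unit_mul p c c' : prime p -> ~~ (p%:Z %| c)%Z -> ~~ (p%:Z %| c')%Z ->
  ~~ (p%:Z %| c * c')%Z.
Proof.
move=> pp h1 h2; rewrite dvdzE abszM Euclid_dvdM //.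
by rewrite -!(dvdzE p%:Z) negb_or h1 h2.
Qed.

Lemma unit_exp p c k : prime p -> ~~ (p%:Z %| c)%Z -> ~~ (p%:Z %| c ^+ k)%Z.
Proof.
move=> pp h; elim: k => [|k IH].
  rewrite expr0 dvdzE /= dvdn1; apply/negP => /eqP p1.
  by move: pp; rewrite p1.
by rewrite exprS unit_mul.
Qed.

Lemma unit_inv p n c : prime p -> ~~ (p%:Z %| c)%Z -> exists y, cg (ppow p n) (c * y) 1.
Proof.
move=> pp hc; have /coprimezP [[u v] /= e] := coprime_ppow n pp hc.
exists v; rewrite /cg -e.
have -> : c * v - (u * ppow p n + v * c) = - (u * ppow p n) by ring.
by rewrite dvdzN; apply: dvdz_mull; exact: dvdzz.
Qed.

Lemma cg_prod d k (f g : nat -> int) :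
  (forall i, (i < k)%N -> cg d (f i) (g i)) ->
  cg d (\prod_(i < k) f i) (\prod_(i < k) g i).
Proof.
move=> h; elim: k h => [|k IH] h; first by rewrite !big_ord0; exact: cg_refl.
rewrite !big_ord_recr /=; apply: cg_mul; last exact: h.
by apply: IH => i /ltnW/h.
Qed.

Lemma coh_cg p x n : coherent p x -> cg (ppow p n) (x n.+1) (x n).
Proof. by move=> h; apply/cgP; apply: h. Qed.

Lemma coh_const p z : coherent p (pconst z).
Proof. by move=> n; rewrite /pconst. Qed.

Lemma coh_add p x y : coherent p x -> coherent p y -> coherent p (padd x y).
Proof. by move=> hx hy n; apply/cgP; apply: cg_add; apply: coh_cg. Qed.

Lemma coh_sub p x y : coherent p x -> coherent p y -> coherent p (psub x y).
Proof. by move=> hx hy n; apply/cgP; apply: cg_sub; apply: coh_cg. Qed.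

Lemma coh_mul p x y : coherent p x -> coherent p y -> coherent p (pmul x y).
Proof. by move=> hx hy n; apply/cgP; apply: cg_mul; apply: coh_cg. Qed.

Lemma coh_exp p x k : coherent p x -> coherent p (pexp x k).
Proof. by move=> hx n; apply/cgP; apply: cg_exp; apply: coh_cg. Qed.

Lemma PoszX (m n : nat) : ((m ^ n)%N)%:Z = (m%:Z) ^+ n.
Proof. by rewrite -!natz natrX. Qed.

Lemma cg_dvd_trans d x y : cg d x y -> (d %| y)%Z -> (d %| x)%Z.
Proof.
move=> h hy; have -> : x = (x - y) + y by rewrite subrK.
exact: dvdzD h hy.
Qed.

Lemma cg_powp p j x y : prime p -> (0 < j)%N -> cg (ppow p j) x y ->
  cg (ppow p j.+1) (x ^+ p) (y ^+ p).
Proof.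
move=> pp j0 h; rewrite /cg subrXX ppowS; apply: dvdz_mul => //.
have h1 : cg p%:Z x y by rewrite -ppow1; apply: cg_le h.
have := @cg_sum p%:Z p (fun i => x ^+ (p.-1 - i) * y ^+ i) (fun i => y ^+ p.-1).
move=> /(_ _) hs; apply: cg_dvd_trans (hs _) _.
  move=> i ip; have -> : y ^+ p.-1 = y ^+ (p.-1 - i) * y ^+ i.
    by rewrite -exprD subnK // -ltnS prednK // prime_gt0.
  by apply: cg_mul; [apply: cg_exp | apply: cg_refl].
rewrite sumr_const card_ord -mulr_natr; apply: dvdz_mull.
by rewrite natz; exact: dvdzz.
Qed.

Lemma cg_powpk p x y : prime p -> cg p%:Z x y -> forall k,
  cg (ppow p k.+1) (x ^+ (p ^ k)) (y ^+ (p ^ k)).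
Proof.
move=> pp h; elim => [|k IH]; first by rewrite ppow1 !expn0 !expr1.
by rewrite expnSr !exprM; apply: cg_powp.
Qed.

Lemma teich_fix p n y : prime p -> cg (ppow p n) (y ^+ p.-1) 1 ->
  forall k, cg (ppow p n) (y ^+ (p ^ k)) y.
Proof.
move=> pp h; elim => [|k IH]; first by rewrite expn0 expr1; exact: cg_refl.
rewrite expnSr exprM; apply: cg_trans (cg_exp p IH) _.
have -> : y ^+ p = y * y ^+ p.-1 by rewrite -exprS prednK // prime_gt0.
apply: cg_trans (_ : cg _ _ (y * 1)) _.
  by apply: cg_mul; [exact: cg_refl| done].
rewrite mulr1; exact: cg_refl.
Qed.

Lemma teich_uniq p n y z : prime p -> cg (ppow p n) (y ^+ p.-1) 1 ->
  cg (ppow p n) (z ^+ p.-1) 1 -> cg p%:Z y z -> cg (ppow p n) y z.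
Proof.
move=> pp hy hz hyz; case: n hy hz => [|k] hy hz; first exact: cg_ppow0.
apply: cg_trans (cg_sym (teich_fix pp hy k)) _.
apply: cg_trans (teich_fix pp hz k).
exact: cg_powpk.
Qed.

Lemma cg_nat_mod (m r d : nat) : (m = r %[mod d])%N -> cg d%:Z m%:Z r%:Z.
Proof. by move=> h; apply/cgP; rewrite !modz_nat h. Qed.

Lemma fermat_int p b : prime p -> ~~ (p%:Z %| b)%Z -> cg p%:Z (b ^+ p.-1) 1.
Proof.
move=> pp hb.
have [r hr] : exists r : nat, cg p%:Z b r%:Z.
  exists (absz (b %% p%:Z)%Z); rewrite gez0_abs; last first.
    by apply: modz_ge0; rewrite eqz_nat; apply: lt0n_neq0; apply: prime_gt0.
  by apply/cgP; rewrite modz_mod.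
have hbp : cg p%:Z (b ^+ p) b.
  apply: cg_trans (cg_exp p hr) _; apply: cg_trans _ (cg_sym hr).
  rewrite -PoszX; apply: cg_nat_mod; exact: fermat_little.
apply: (@cg_cancel p 1 b) => //; rewrite ppow1 mulr1 -exprS prednK //.
exact: prime_gt0.
Qed.

Lemma teich_ex p b n : prime p -> ~~ (p%:Z %| b)%Z ->
  exists y, cg (ppow p n) (y ^+ p.-1) 1 /\ cg p%:Z y b.
Proof.
move=> pp hb; have hf := fermat_int pp hb.
exists (b ^+ (p ^ n.-1)); split.
  case: n => [|k]; first exact: cg_ppow0.
  rewrite -exprM mulnC exprM -(expr1n _ (p ^ k)); exact: cg_powpk.
have h1 : cg (ppow p 1) (b ^+ p.-1) 1 by rewrite ppow1.
by have := teich_fix pp h1 n.-1; rewrite ppow1.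
Qed.

Lemma coh_choice p (P : nat -> int -> Prop) :
  (forall n, exists y, P n y) ->
  (forall n y y', P n y -> P n.+1 y' -> cg (ppow p n) y' y) ->
  exists x, coherent p x /\ forall n, P n (x n).
Proof.
move=> hex hc.
pose f n := proj1_sig (constructive_indefinite_description _ (hex n)).
have hf n : P n (f n) by rewrite /f; case: constructive_indefinite_description.
exists f; split => // n; apply/cgP; exact: hc (hf n) (hf n.+1).
Qed.

Lemma unit_at p c n : prime p -> coherent p c -> ~~ (p%:Z %| c 1%N)%Z ->
  (0 < n)%N -> ~~ (p%:Z %| c n)%Z.
Proof.
move=> pp hc h1 n0; apply: unit_cg h1; apply: cg_sym; rewrite -ppow1.
exact: coh_le.
Qed.

Lemma coh_div p c b : prime p -> coherent p c -> coherent p b ->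
  ~~ (p%:Z %| c 1%N)%Z -> exists x, coherent p x /\ peq p (pmul c x) b.
Proof.
move=> pp hc hb hu.
pose P := (fun n y => cg (ppow p n) (c n * y) (b n)).
have h1 : forall n, exists y, P n y.
  move=> n; case: n => [|n]; first by exists 0; exact: cg_ppow0.
  have [y0 hy0] := unit_inv n.+1 pp (unit_at pp hc hu (ltn0Sn n)).
  exists (y0 * b n.+1); rewrite /P mulrA.
  apply: cg_trans (_ : cg _ _ (1 * b n.+1)) _; last by rewrite mul1r; exact: cg_refl.
  by apply: cg_mul => //; exact: cg_refl.
have h2 : forall n y y', P n y -> P n.+1 y' -> cg (ppow p n) y' y.
  move=> n y y'; rewrite /P => h h'; case: n h h' => [|n] h h'; first exact: cg_ppow0.
  apply: (@cg_cancel p n.+1 (c n.+1)) => //; first exact: unit_at.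
  apply: cg_trans _ (cg_sym h).
  apply: cg_trans (_ : cg _ _ (c n.+2 * y')) _.
    by apply: cg_mul; [apply: cg_sym; apply/cgP; apply: hc| apply: cg_refl].
  apply: cg_trans (_ : cg _ _ (b n.+2)) _; first by apply: cg_le h'.
  by apply/cgP; apply: hb.
have [x [hx hP]] := coh_choice h1 h2.
exists x; split => // n; apply/cgP; exact: hP.
Qed.

Lemma dvd_cancel_fact p n (c D : nat) : prime p -> (0 < c)%N ->
  (p ^ (n + c) %| c * D)%N -> (p ^ n %| D)%N.
Proof.
move=> pp c0 h; case: (posnP D) => [->|D0]; first exact: dvdn0.
have cD0 : (0 < c * D)%N by rewrite muln_gt0 c0.
move: h; rewrite pfactor_dvdn // lognM // => h.
rewrite pfactor_dvdn //.
have hl : (logn p c <= c)%N.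
  have h1 := pfactor_dvdnn p c.
  have h2 : (p ^ logn p c <= c)%N by apply: dvdn_leq.
  have h3 : (logn p c < p ^ logn p c)%N by apply: ltn_expl; apply: prime_gt1.
  lia.
lia.
Qed.

Lemma euler_seq_size n : size (euler_seq n) = n.+1.
Proof. by elim: n => [|n IH] //=; rewrite size_rcons IH. Qed.

Lemma euler_seq_nth n j : (j <= n)%N -> (euler_seq n)`_j = euler j.
Proof.
rewrite /euler; elim: n => [|n IH]; first by rewrite leqn0 => /eqP ->.
rewrite leq_eqVlt => /orP [/eqP -> //|]; rewrite ltnS => hj.
by rewrite /= nth_rcons euler_seq_size ltnS hj IH.
Qed.

Lemma euler0 : euler 0 = 1.
Proof. by []. Qed.

Lemma euler_rec n :
  euler n.+1 = - (\sum_(j < n.+1) ('C(n.+1, j))%:R * euler j) / 2%:R.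
Proof.
rewrite {1}/euler /= nth_rcons euler_seq_size ltnn eqxx.
congr (- _ / _); apply: eq_bigr => j _; rewrite euler_seq_nth //.
by rewrite -ltnS.
Qed.

Lemma eulerA n : \sum_(k < n.+1) ('C(n, k))%:R * euler k =
  (n == 0%N)%:R * 2%:R - euler n.
Proof.
case: n => [|n]; first by rewrite big_ord_recr big_ord0 /= euler0 add0r mul1r; lra.
rewrite big_ord_recr /= binn euler_rec /=.
set S := \sum_(_ < _) _.
have -> : S = \sum_(j < n.+1) ('C(n.+1, j))%:R * euler j by [].
by field.
Qed.

Lemma bin_mul n j k : (k <= j)%N -> (j <= n)%N ->
  ('C(n, j) * 'C(j, k) = 'C(n, k) * 'C(n - k, j - k))%N.
Proof.
move=> hkj hjn.
have e1 := bin_fact hkj. have e2 := bin_fact hjn.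
have hkn : (k <= n)%N by apply: leq_trans hjn.
have e4 := bin_fact hkn.
have hh : (j - k <= n - k)%N by lia.
have e3 := bin_fact hh.
have e5 : (n - k - (j - k) = n - j)%N by lia.
rewrite e5 in e3.
apply/eqP; rewrite -(@eqn_pmul2r (k`! * (j - k)`! * (n - j)`!)); last first.
  by rewrite !muln_gt0 !fact_gt0.
apply/eqP.
set a := 'C(n, j) in e2 *. set b := 'C(j, k) in e1 *.
set c := 'C(n, k) in e4 *. set d := 'C(n - k, j - k) in e3 *.
set K := k`! in e1 e4 *. set JK := (j - k)`! in e1 e3 *.
set NJ := (n - j)`! in e2 e3 *. set NK := (n - k)`! in e3 e4.
set J := j`! in e1 e2. set N := n`! in e2 e4.
have -> : (a * b * (K * JK * NJ) = a * (b * (K * JK)) * NJ)%N by ring.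
rewrite e1 -mulnA e2.
have -> : (c * d * (K * JK * NJ) = c * (K * (d * (JK * NJ))))%N by ring.
by rewrite e3 e4.
Qed.

Lemma inner_sum (x y : rat) n k : (k <= n)%N ->
  \sum_(j < n.+1) ('C(n, j) * 'C(j, k))%:R * (x ^+ (j - k) * y ^+ (n - j)) =
  ('C(n, k))%:R * (x + y) ^+ (n - k).
Proof.
move=> hkn.
rewrite -(big_mkord xpredT (fun j => ('C(n, j) * 'C(j, k))%:R * (x ^+ (j - k) * y ^+ (n - j)))).
rewrite (@big_cat_nat _ _ _ k) //=; last by lia.
rewrite big_nat_cond big1 ?add0r; last first.
  by move=> j /andP [/andP [_ hj] _]; rewrite (bin_small hj) muln0 mul0r.
rewrite (big_addn 0 _ k) subSn // big_mkord.
rewrite addrC exprDn mulr_sumr; apply: eq_bigr => t _.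
have ht : (t <= n - k)%N by rewrite -ltnS; exact: ltn_ord.
rewrite bin_mul //; last by lia.
have -> : (t + k - k = t)%N by lia.
have -> : (n - (t + k) = n - k - t)%N by lia.
rewrite natrM mulrnAr -mulr_natl; ring.
by rewrite leq_addl.
Qed.

Lemma appell (c : nat -> rat) x y n :
  \sum_(k < n.+1) ('C(n, k))%:R * c k * (x + y) ^+ (n - k) =
  \sum_(j < n.+1) ('C(n, j))%:R * y ^+ (n - j) *
     \sum_(k < j.+1) ('C(j, k))%:R * c k * x ^+ (j - k).
Proof.
have widen (j : 'I_n.+1) : \sum_(k < j.+1) ('C(j, k))%:R * c k * x ^+ (j - k) =
    \sum_(k < n.+1) ('C(j, k))%:R * c k * x ^+ (j - k).
  rewrite (big_ord_widen n.+1 (fun k => ('C(j, k))%:R * c k * x ^+ (j - k))) //.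
  rewrite big_mkcond; apply: eq_bigr => k _; case: ifP => // hk.
  by rewrite bin_small ?mul0r // ltnNge -ltnS hk.
rewrite [RHS](eq_bigr (fun j : 'I_n.+1 => ('C(n, j))%:R * y ^+ (n - j) *
     \sum_(k < n.+1) ('C(j, k))%:R * c k * x ^+ (j - k))); last first.
  by move=> j _; rewrite widen.
rewrite [RHS](eq_bigr (fun j : 'I_n.+1 => \sum_(k < n.+1) ('C(n, j))%:R * y ^+ (n - j) *
     (('C(j, k))%:R * c k * x ^+ (j - k)))); last by move=> j _; rewrite mulr_sumr.
rewrite exchange_big /=; apply: eq_bigr => k _.
have hk : (k <= n)%N by rewrite -ltnS.
rewrite mulrAC -inner_sum // mulr_suml; apply: eq_bigr => j _.
rewrite natrM; ring.
Qed.

Lemma sign2 m : (-1 : rat) ^+ m * (-1) ^+ m = 1.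
Proof.
elim: m => [|m IH]; first by rewrite expr0 mulr1.
rewrite !exprS; transitivity ((-1 : rat) ^+ m * (-1) ^+ m); [ring | exact: IH].
Qed.

Lemma sign_sub n j : (j <= n)%N -> (-1 : rat) ^+ n = (-1) ^+ (n - j) * (-1) ^+ j.
Proof. by move=> h; rewrite -exprD subnK. Qed.

Lemma rec_uniq (u v : nat -> rat) :
  (forall n, u n + \sum_(j < n.+1) ('C(n, j))%:R * u j = 2%:R) ->
  (forall n, v n + \sum_(j < n.+1) ('C(n, j))%:R * v j = 2%:R) ->
  forall n, u n = v n.
Proof.
move=> hu hv; elim/ltn_ind => n IH.
have := hu n; have := hv n; rewrite !big_ord_recr /= binn.
have -> : \sum_(j < n) ('C(n, j))%:R * u j = \sum_(j < n) ('C(n, j))%:R * v j.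
  by apply: eq_bigr => j _; rewrite IH.
move=> e1 e2; lra.
Qed.

Lemma sum_delta n (f : nat -> rat) :
  \sum_(j < n.+1) ('C(n, j))%:R * f j * ((nat_of_ord j == 0%N)%:R * 2%:R) = f 0%N * 2%:R.
Proof.
rewrite big_ord_recl /= bin0 big1 ?addr0; first by ring.
by move=> j _; rewrite /= mul0r mulr0.
Qed.

Lemma g_rec n : (-1) ^+ n * euler n +
  \sum_(j < n.+1) ('C(n, j))%:R * ((-1) ^+ j * euler j) = 2%:R.
Proof.
have := appell euler 1 (-1) n.
rewrite subrr big_ord_recr /= subnn expr0 binn mulr1 big1 ?add0r; last first.
  move=> k _; rewrite expr0n /=; have hk := ltn_ord k.
  have -> : (n - k == 0)%N = false by lia.
  by rewrite mulr0.
rewrite (eq_bigr (fun j : 'I_n.+1 => ('C(n, j))%:R * (-1) ^+ (n - j) *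
   ((nat_of_ord j == 0%N)%:R * 2%:R - euler j))); last first.
  move=> j _; congr (_ * _); rewrite -eulerA; apply: eq_bigr => k _.
  by rewrite expr1n mulr1.
move=> e; rewrite mul1r in e.
have e2 : (-1) ^+ n * euler n = \sum_(j < n.+1) ('C(n, j))%:R *
    ((-1) ^+ j * ((nat_of_ord j == 0%N)%:R * 2%:R - euler j)).
  rewrite e mulr_sumr; apply: eq_bigr => j _.
  have hj : (j <= n)%N by rewrite -ltnS.
  rewrite (sign_sub hj).
  transitivity (('C(n, j))%:R * ((-1) ^+ j * ((nat_of_ord j == 0%N)%:R * 2%:R - euler j)) *
     ((-1) ^+ (n - j) * (-1) ^+ (n - j))); first by ring.
  by rewrite sign2 mulr1.
rewrite e2 -big_split /=.
rewrite (eq_bigr (fun j : 'I_n.+1 => ('C(n, j))%:R * (-1) ^+ j * ((nat_of_ord j == 0%N)%:R * 2%:R))).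
  by rewrite (sum_delta n (fun j => (-1) ^+ j)) expr0 mul1r.
by move=> j _; ring.
Qed.

Lemma h_rec n : ((n == 0%N)%:R * 2%:R - euler n) +
  \sum_(j < n.+1) ('C(n, j))%:R * ((nat_of_ord j == 0%N)%:R * 2%:R - euler j) = 2%:R.
Proof.
have e : \sum_(j < n.+1) ('C(n, j))%:R * ((nat_of_ord j == 0%N)%:R * 2%:R - euler j) =
   \sum_(j < n.+1) ('C(n, j))%:R * 1 * ((nat_of_ord j == 0%N)%:R * 2%:R) -
   \sum_(j < n.+1) ('C(n, j))%:R * euler j.
  by rewrite -sumrB; apply: eq_bigr => j _; ring.
by rewrite e (sum_delta n (fun => 1)) eulerA; ring.
Qed.

Lemma euler_odd_sign n : (0 < n)%N -> (-1) ^+ n * euler n = - euler n.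
Proof.
move=> n0; have := @rec_uniq (fun n => (-1) ^+ n * euler n)
  (fun n => (n == 0%N)%:R * 2%:R - euler n) g_rec h_rec n.
by rewrite /=; case: n n0 => // n _; rewrite mul0r add0r.
Qed.

Lemma euler_sym m (F a : rat) :
  \sum_(k < m.+1) ('C(m, k))%:R * (euler k * F ^+ k) * (F - a) ^+ (m - k) =
  (-1) ^+ m * \sum_(k < m.+1) ('C(m, k))%:R * (euler k * F ^+ k) * a ^+ (m - k).
Proof.
rewrite (appell (fun k => euler k * F ^+ k)) mulr_sumr; apply: eq_bigr => j _.
have hj : (j <= m)%N by rewrite -ltnS.
have inn : \sum_(k < j.+1) ('C(j, k))%:R * (euler k * F ^+ k) * F ^+ (j - k) =
    F ^+ j * ((nat_of_ord j == 0%N)%:R * 2%:R - euler j).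
  rewrite -eulerA mulr_sumr; apply: eq_bigr => k _.
  have hk : (k <= j)%N by rewrite -ltnS.
  have ->: F ^+ j = F ^+ k * F ^+ (j - k) by rewrite -exprD subnKC.
  ring.
rewrite inn (exprNn a) (sign_sub hj).
case: (posnP j) => [j0|jp].
  by rewrite j0 /= euler0 subn0; ring.

have hB := euler_odd_sign jp.
transitivity (('C(m, j))%:R * ((-1) ^+ (m - j) * a ^+ (m - j)) * F ^+ j *
  ((-1) ^+ j * euler j)); last by ring.
rewrite hB /=; ring.
Qed.

Lemma euler_int k : euler k * 2%:R ^+ k \is a Num.int.
Proof.
elim/ltn_ind: k => k IH; case: k IH => [|k] IH.
  by rewrite euler0 expr0 mulr1 int_num1.
have -> : euler k.+1 * 2%:R ^+ k.+1 = - \sum_(j < k.+1) ('C(k.+1, j))%:R *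
   (euler j * 2%:R ^+ j) * 2%:R ^+ (k - j).
  rewrite euler_rec exprS.
  transitivity (- (\sum_(j < k.+1) ('C(k.+1, j))%:R * euler j) * 2%:R ^+ k);
    first by field.
  rewrite mulNr mulr_suml; congr (- _); apply: eq_bigr => j _.
  have hj : (j <= k)%N by rewrite -ltnS.
  have -> : (2%:R : rat) ^+ k = 2%:R ^+ j * 2%:R ^+ (k - j) by rewrite -exprD subnKC.
  ring.
rewrite rpredN; apply: rpred_sum => j _; rewrite rpredM //.
  by rewrite rpredM ?natr_int // IH.
by rewrite rpredX ?natr_int.
Qed.

Definition G k : int := Num.floor (euler k * 2%:R ^+ k).

Lemma GE k : (G k)%:~R = euler k * 2%:R ^+ k.
Proof. by have := euler_int k; rewrite intrEfloor => /eqP. Qed.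

Lemma numden_G k : numq (euler k) * 2 ^+ k = G k * denq (euler k).
Proof.
apply: (@intr_inj rat); rewrite !rmorphM /= GE numqE rmorphXn /=; ring.
Qed.

Lemma euler_den_unit p k : prime p -> odd p -> ~~ (p%:Z %| denq (euler k))%Z.
Proof.
move=> pp op; apply/negP => hd.
have hc : coprimez (denq (euler k)) (numq (euler k)).
  by rewrite coprimezE coprime_sym coprime_num_den.
have h2 : (denq (euler k) %| 2 ^+ k)%Z.
  rewrite -(Gauss_dvdzr _ hc) numden_G; apply: dvdz_mull; exact: dvdzz.
have h3 := dvdz_trans hd h2.
move: h3; rewrite dvdzE abszX /= Euclid_dvdX // => /andP [h4 _].
have h5 := dvdn_leq (isT : (0 < 2)%N) h4.
have h6 := prime_gt1 pp.
have p2 : p = 2%N by lia.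
by move: op; rewrite p2.
Qed.

Definition Pm (m : nat) (F y : int) : int :=
  \sum_(k < m.+1) ('C(m, k))%:R * F ^+ k * y ^+ (m - k) * 2%:R ^+ (m - k) * G k.

Lemma Pm_rat m F y : (Pm m F y)%:~R = (2%:R : rat) ^+ m *
  \sum_(k < m.+1) ('C(m, k))%:R * (euler k * (F%:~R) ^+ k) * (y%:~R) ^+ (m - k).
Proof.
rewrite /Pm rmorph_sum mulr_sumr; apply: eq_bigr => k _.
have hk : (k <= m)%N by rewrite -ltnS.
rewrite !rmorphM !rmorphXn /= GE !rmorph_nat.
have -> : (2%:R : rat) ^+ m = 2%:R ^+ k * 2%:R ^+ (m - k) by rewrite -exprD subnKC.
ring.
Qed.

Lemma Pm_sym m F a : Pm m F (F - a) = (-1) ^+ m * Pm m F a.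
Proof.
apply: (@intr_inj rat); rewrite rmorphM rmorphXn rmorphN1 !Pm_rat rmorphB /=.
rewrite euler_sym Pm_rat; ring.
Qed.

Lemma fact_mono k n : (k <= n)%N -> (k`! <= n`!)%N.
Proof.
elim: n => [|n IH]; first by rewrite leqn0 => /eqP ->.
rewrite leq_eqVlt => /orP [/eqP -> //|]; rewrite ltnS => /IH h.
rewrite factS; apply: leq_trans h _; apply: leq_pmull => //.
Qed.

Lemma prod_ffact (m k : nat) : \prod_(i < k) (m%:Z - i%:Z) = (m ^_ k)%N%:Z.
Proof.
elim: k => [|k IH]; first by rewrite big_ord0.
rewrite big_ord_recr /= IH ffactnSr PoszM; case: (leqP k m) => hk.
  by rewrite subzn.
by rewrite ffact_small // !mul0r.
Qed.

Lemma sum_trunc (f : nat -> int) m M : (m < M)%N ->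
  (forall k, (m < k)%N -> f k = 0) -> \sum_(k < M) f k = \sum_(k < m.+1) f k.
Proof.
move=> hM h; rewrite [RHS](big_ord_widen M f hM) [RHS]big_mkcond.
apply: eq_bigr => k _; case: ifP => // hk.
by rewrite h // ltnNge -ltnS hk.
Qed.

Lemma cg_dvd_mul0 d x y z : (d %| y)%Z -> cg d (x * y * z) 0.
Proof. by move=> h; apply/cg0; apply: dvdz_mulr; apply: dvdz_mull. Qed.

Lemma dvd_cancel_factz p n (c : nat) (d : int) : prime p -> (0 < c)%N ->
  (ppow p (n + c) %| c%:Z * d)%Z -> (ppow p n %| d)%Z.
Proof.
move=> pp c0; rewrite /ppow !dvdzE /= abszM /= => h.
exact: dvd_cancel_fact h.
Qed.

Lemma q_dvd p F a q n k : prime p -> (p %| F)%N -> coherent p a -> punit p a ->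
  peq p (pmul a q) (pconst F%:Z) -> (n <= k)%N -> (ppow p n %| q n ^+ k)%Z.
Proof.
move=> pp pF ha hu hq hnk; case: n hnk => [|n] hnk.
  by rewrite /ppow expn0 dvd1z.
have hqn : (p%:Z %| q n.+1)%Z.
  apply/cg0; apply: (@cg_cancel p 1 (a n.+1)) => //.
    exact: unit_at.
  rewrite ppow1 mulr0; apply: (@cg_trans _ _ F%:Z).
    by rewrite -ppow1; apply: (cg_le (ltn0Sn n)); apply: (peq_cg _ hq).
  by apply/cg0; rewrite dvdzE /=.
apply: dvdz_trans (_ : (p%:Z ^+ k %| _)%Z); last exact: dvdz_exp2r.
by rewrite /ppow PoszX; apply: dvdz_exp2l.
Qed.

Lemma e_cg p k e n : prime p -> odd p -> IsRat p (euler k) e ->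
  cg (ppow p n) (2%:R ^+ k * e n) (G k).
Proof.
move=> pp op [he hr].
apply: (@cg_cancel p n (denq (euler k))) => //; first exact: euler_den_unit.
have h1 := peq_cg n hr; rewrite /pmul /pconst in h1.
have -> : denq (euler k) * (2%:R ^+ k * e n) = 2%:R ^+ k * (denq (euler k) * e n).
  by ring.
apply: cg_trans (cg_mul (cg_refl _ (2%:R ^+ k)) h1) _.
rewrite mulrC (numden_G k) mulrC; exact: cg_refl.
Qed.

Lemma bin_cg p x (bink : padic) n k m N : prime p -> coherent p x -> coherent p bink ->
  peq p (pmul (pconst (k`!)%:Z) bink) (fun n => \prod_(i < k) (x n - i%:Z)) ->
  (n + k`! <= N)%N -> (m%:Z = x N %[mod ppow p N])%Z ->
  cg (ppow p n) (bink n) ('C(m, k))%:R.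
Proof.
move=> pp hx hb hpb hLN hm.
set L := (n + k`!)%N.
have hxL : cg (ppow p L) (x L) m%:Z.
  apply: cg_trans (cg_sym (coh_le hx hLN)) _.
  exact: cg_sym (cg_le hLN (proj1 (cgP _ _ _) hm)).
have h1 := peq_cg L hpb; rewrite /pmul /pconst in h1.
have h2 : cg (ppow p L) (\prod_(i < k) (x L - i%:Z)) (\prod_(i < k) (m%:Z - i%:Z)).
  apply: (@cg_prod _ k (fun i => x L - i%:Z) (fun i => m%:Z - i%:Z)) => i _.
  by apply: cg_sub => //; exact: cg_refl.
rewrite prod_ffact -bin_ffact PoszM in h2.
have h3 := cg_trans h1 h2.
have h4 : (ppow p (n + k`!) %| (k`!)%:Z * (bink L - ('C(m, k))%:Z))%Z.
  by move: h3; rewrite /cg mulrBr [_ * _ in X in (_ %| _ - X)%Z]mulrC.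
have h5 := dvd_cancel_factz pp (fact_gt0 k) h4.
apply: cg_trans (cg_sym (coh_le hb (leq_addr (k`!) n))) _.
by rewrite natz.
Qed.

Lemma H_eval p s a F h n : prime p -> odd p -> (p %| F)%N -> coherent p s ->
  coherent p a -> punit p a -> IsH p s a F h -> (0 < n)%N ->
  exists N0, forall N m, (N0 <= N)%N ->
  (m%:Z = psub (pconst 1) s N %[mod ppow p N])%Z ->
  exists w, cg p%:Z w (a 1%N) /\ cg (ppow p n) (w ^+ p.-1) 1 /\
   cg (ppow p n) (2%:R ^+ m * w ^+ m * h n) (Pm m F%:Z (a n)).
Proof.
move=> pp op pF hs ha hu
  [l [u [q [S [bin [e [[w [[hw [hw1 hwa]] [hl hwl]]] [[hu' hpow] [[hq hqa]
  [hbin [he [[hS hsum] [hh hhu]]]]]]]]]]]]] n0.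
set x := psub (pconst 1) s.
have hx : coherent p x by apply: coh_sub => //; exact: coh_const.
have [N1 hN1] := hpow n.
exists (maxn N1 (n + n`!)) => N m hN hm.
have hN1N : (N1 <= N)%N by apply: leq_trans hN; exact: leq_maxl.
have hLN : (n + n`! <= N)%N by apply: leq_trans hN; exact: leq_maxr.
exists (w n); split.
  apply: cg_trans (proj1 (cgP _ _ _) hwa).
  by rewrite -ppow1; exact: coh_le.
split; first exact: (peq_cg n hw1).
have hm1 : (m%:Z = x N1 %[mod ppow p N1])%Z.
  apply/cgP; apply: cg_trans (cg_le hN1N (proj1 (cgP _ _ _) hm)) _.
  exact: coh_le.
have hlu := proj1 (cgP _ _ _) (hN1 m hm1).
have [K hK] := hsum n.
set M := maxn K m.+1.
have hSn := proj1 (cgP _ _ _) (hK M (leq_maxl _ _)).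
rewrite /pmul /pexp in hSn.
have hterm : forall k, (k < M)%N -> cg (ppow p n) (bin k n * q n ^+ k * e k n)
    (('C(m, k))%:R * q n ^+ k * e k n).
  move=> k _; case: (ltnP k n) => hk.
    apply: cg_mul; last exact: cg_refl.
    apply: cg_mul; last exact: cg_refl.
    have [hb1 hb2] := hbin k.
    apply: (bin_cg pp hx hb1 hb2 _ hm).
    apply: leq_trans hLN; rewrite leq_add2l; apply: fact_mono; exact: ltnW.
  have hd := q_dvd pp pF ha hu hqa hk.
  apply: cg_trans (cg_dvd_mul0 _ _ hd) (cg_sym (cg_dvd_mul0 _ _ hd)).
have hs2 : cg (ppow p n) (S n) (\sum_(k < m.+1) ('C(m, k))%:R * q n ^+ k * e k n).
  apply: cg_trans (cg_sym hSn) _.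
  rewrite -(@sum_trunc (fun k => ('C(m, k))%:R * q n ^+ k * e k n) m M); last first.
  - by move=> k hk; rewrite bin_small // mul0r mul0r.
  - exact: leq_maxr.
  exact: (@cg_sum _ M (fun k => bin k n * q n ^+ k * e k n)
     (fun k => ('C(m, k))%:R * q n ^+ k * e k n)).
have hP : cg (ppow p n) (2%:R ^+ m * a n ^+ m *
    \sum_(k < m.+1) ('C(m, k))%:R * q n ^+ k * e k n) (Pm m F%:Z (a n)).
  rewrite mulr_sumr /Pm.
  apply: (@cg_sum _ m.+1 (fun k => 2%:R ^+ m * a n ^+ m * (('C(m, k))%:R * q n ^+ k * e k n))
     (fun k => ('C(m, k))%:R * F%:Z ^+ k * a n ^+ (m - k) * 2%:R ^+ (m - k) * G k)).
  move=> k hk; have hkm : (k <= m)%N by rewrite -ltnS.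
  have hqa_n := peq_cg n hqa; rewrite /pmul /pconst in hqa_n.
  have he_n := e_cg n pp op (he k).
  have -> : 2%:R ^+ m * a n ^+ m * (('C(m, k))%:R * q n ^+ k * e k n) =
     ('C(m, k))%:R * (a n * q n) ^+ k * a n ^+ (m - k) * 2%:R ^+ (m - k) *
     (2%:R ^+ k * e k n).
    rewrite exprMn.
    have -> : (2%:R : int) ^+ m = 2%:R ^+ k * 2%:R ^+ (m - k) by rewrite -exprD subnKC.
    have -> : a n ^+ m = a n ^+ k * a n ^+ (m - k) by rewrite -exprD subnKC.
    ring.
  apply: cg_mul => //; apply: cg_mul; last exact: cg_refl.
  apply: cg_mul; last exact: cg_refl.
  by apply: cg_mul; [exact: cg_refl | exact: cg_exp].
have hhu_n := peq_cg n hhu; rewrite /pmul in hhu_n.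
have hwl_n := peq_cg n hwl; rewrite /pmul in hwl_n.
apply: cg_trans (_ : cg _ _ (2%:R ^+ m * w n ^+ m * (u n * S n))) _.
  by apply: cg_mul => //; exact: cg_refl.
apply: cg_trans (_ : cg _ _ (2%:R ^+ m * w n ^+ m * (l n ^+ m * S n))) _.
  apply: cg_mul; first exact: cg_refl.
  by apply: cg_mul; [exact: cg_sym | exact: cg_refl].
have -> : 2%:R ^+ m * w n ^+ m * (l n ^+ m * S n) = 2%:R ^+ m * (w n * l n) ^+ m * S n.
  by rewrite exprMn; ring.
apply: cg_trans (_ : cg _ _ (2%:R ^+ m * a n ^+ m * S n)) _.
  apply: cg_mul; last exact: cg_refl.
  by apply: cg_mul; [exact: cg_refl | exact: cg_exp].
apply: cg_trans hP.
by apply: cg_mul => //; exact: cg_refl.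
Qed.

Lemma odd_not2 p : prime p -> odd p -> ~~ (p%:Z %| 2%:R)%Z.
Proof.
move=> pp op; apply/negP; rewrite natz dvdzE /= => h.
have h5 := dvdn_leq (isT : (0 < 2)%N) h.
have h6 := prime_gt1 pp.
have p2 : p = 2%N by lia.
by move: op; rewrite p2.
Qed.

Lemma not_dvd_m1 p : prime p -> ~~ (p%:Z %| -1)%Z.
Proof.
move=> pp; rewrite dvdzE /= dvdn1; apply/negP => /eqP p1.
by move: pp; rewrite p1.
Qed.

Lemma sign_even k : ~~ odd k -> (-1 : int) ^+ k = 1.
Proof. by move=> h; rewrite -signr_odd (negbTE h). Qed.

Lemma punit_sub p F a : prime p -> (p %| F)%N -> punit p a ->
  punit p (psub (pconst F%:Z) a).
Proof.
move=> pp pF hu; rewrite /punit /psub /pconst.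
apply: (@unit_cg _ (- a 1%N)); last by rewrite dvdzN.
rewrite /cg; have -> : - a 1%N - (F%:Z - a 1%N) = - F%:Z by ring.
by rewrite dvdzN dvdzE /=.
Qed.

Lemma H_uniq p s a F h1 h2 : prime p -> odd p -> (p %| F)%N -> coherent p s ->
  coherent p a -> punit p a -> IsH p s a F h1 ->
  IsH p s (psub (pconst F%:Z) a) F h2 -> peq p h1 h2.
Proof.
move=> pp op pF hs ha hu H1 H2 n; apply/cgP.
case: (posnP n) => [->|n0]; first exact: cg_ppow0.
have ha2 : coherent p (psub (pconst F%:Z) a) by apply: coh_sub => //; exact: coh_const.
have hu2 := punit_sub pp pF hu.
have [N1 hN1] := H_eval pp op pF hs ha hu H1 n0.
have [N2 hN2] := H_eval pp op pF hs ha2 hu2 H2 n0.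
set N := maxn N1 N2.
set x := psub (pconst 1) s.
have hP0 : ppow p N != 0.
  by rewrite /ppow eqz_nat expn_eq0 negb_and; apply/orP; left; rewrite -lt0n prime_gt0.
set m := absz ((x N) %% ppow p N)%Z.
have hm : (m%:Z = x N %[mod ppow p N])%Z.
  by rewrite /m gez0_abs ?modz_mod // modz_ge0.
have [w1 [hw1a [hw1 e1]]] := hN1 N m (leq_maxl _ _) hm.
have [w2 [hw2a [hw2 e2]]] := hN2 N m (leq_maxr _ _) hm.
have hw : cg (ppow p n) w2 (- w1).
  apply: teich_uniq => //.
    rewrite exprNn sign_even ?mul1r //.
    by move: op; rewrite -{1}(prednK (prime_gt0 pp)) /=; case: (odd p.-1).
  apply: cg_trans hw2a _; rewrite /psub /pconst.
  apply: cg_trans (_ : cg _ _ (- a 1%N)) _.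
    rewrite /cg; have -> : (F%:Z - a 1%N) - (- a 1%N) = F%:Z by ring.
    by rewrite dvdzE /=.
  exact: cg_opp (cg_sym hw1a).
have hw1u : ~~ (p%:Z %| w1)%Z by apply: unit_cg (cg_sym hw1a) hu.
set c := (-1) ^+ m * 2%:R ^+ m * w1 ^+ m.
have hcu : ~~ (p%:Z %| c)%Z.
  by rewrite /c !unit_mul // unit_exp // ?not_dvd_m1 ?odd_not2.
apply: (@cg_cancel p n c) => //.
apply: cg_trans (_ : cg _ _ ((-1) ^+ m * Pm m F%:Z (a n))) _.
  rewrite /c -!mulrA; apply: cg_mul; first exact: cg_refl.
  by rewrite mulrA.
rewrite -Pm_sym.
rewrite /psub /pconst in e2.
apply: cg_trans (_ : cg _ _ (2%:R ^+ m * w2 ^+ m * h2 n)) _.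
  exact: cg_sym e2.
rewrite /c; have -> : (-1) ^+ m * 2%:R ^+ m * w1 ^+ m * h2 n =
   2%:R ^+ m * (- w1) ^+ m * h2 n by rewrite (exprNn w1); ring.
apply: cg_mul; last exact: cg_refl.
by apply: cg_mul; [exact: cg_refl | apply: cg_exp; exact: hw].
Qed.

Lemma ppow_neq0 p n : prime p -> ppow p n != 0.
Proof.
move=> pp; rewrite /ppow eqz_nat expn_eq0 negb_and; apply/orP; left.
by rewrite -lt0n prime_gt0.
Qed.

Lemma nat_rep p n (z : int) : prime p ->
  ((absz (z %% ppow p n)%Z)%:Z = z %[mod ppow p n])%Z.
Proof. by move=> pp; rewrite gez0_abs ?modz_mod // modz_ge0 // ppow_neq0. Qed.

Lemma exists_teich p a : prime p -> coherent p a -> punit p a ->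
  exists w, IsTeich p a w.
Proof.
move=> pp ha hu.
pose P := fun n y => cg (ppow p n) (y ^+ p.-1) 1 /\ cg p%:Z y (a 1%N).
have h1 : forall n, exists y, P n y by move=> n; exact: teich_ex.
have h2 : forall n y y', P n y -> P n.+1 y' -> cg (ppow p n) y' y.
  move=> n y y' [hy1 hy2] [hy1' hy2']; apply: teich_uniq => //.
    exact: cg_le hy1'.
  exact: cg_trans hy2' (cg_sym hy2).
have [w [hw hP]] := coh_choice h1 h2.
exists w; split => //; split.
  by move=> n; apply/cgP; exact: (hP n).1.
by apply/cgP; exact: (hP 1%N).2.
Qed.

Lemma pow_period0 p n (l : int) m1 m2 : prime p -> cg p%:Z l 1 ->
  (m2 <= m1)%N -> (p ^ n.-1 %| m1 - m2)%N ->
  cg (ppow p n) (l ^+ m1) (l ^+ m2).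
Proof.
move=> pp hl hm /dvdnP [t ht].
case: n ht => [|n] ht; first exact: cg_ppow0.
have hpk : cg (ppow p n.+1) (l ^+ (p ^ n)) 1.
  by have := cg_powpk pp hl n; rewrite expr1n.
have -> : m1 = (m2 + t * p ^ n)%N by rewrite -ht /= subnKC.
rewrite exprD mulnC exprM.
apply: cg_trans (_ : cg _ _ (l ^+ m2 * 1)) _; last by rewrite mulr1; exact: cg_refl.
apply: cg_mul; first exact: cg_refl.
by have := cg_exp t hpk; rewrite expr1n.
Qed.

Lemma cg_natdvd p k (m1 m2 : nat) : (m2 <= m1)%N ->
  cg (ppow p k) m1%:Z m2%:Z -> (p ^ k %| m1 - m2)%N.
Proof. move=> hm; rewrite /cg subzn // => h; exact: h. Qed.

Lemma pow_period p n (l : int) (m1 m2 : nat) : prime p -> cg p%:Z l 1 ->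
  cg (ppow p n.-1) m1%:Z m2%:Z -> cg (ppow p n) (l ^+ m1) (l ^+ m2).
Proof.
move=> pp hl h; case: (leqP m2 m1) => hm.
  by apply: pow_period0 => //; apply: cg_natdvd.
apply: cg_sym; apply: pow_period0 => //; first exact: ltnW.
by apply: cg_natdvd; [exact: ltnW | exact: cg_sym].
Qed.

Lemma exists_pow p (l x : padic) : prime p -> coherent p l -> coherent p x ->
  (forall n, (0 < n)%N -> cg p%:Z (l n) 1) -> exists u, IsPow p l x u.
Proof.
move=> pp hl hx hl1.
pose r n := absz (x n %% ppow p n)%Z.
have hr n : cg (ppow p n) (r n)%:Z (x n) by apply/cgP; exact: nat_rep.
exists (fun n => l n ^+ r n); split.
  move=> n; apply/cgP; case: (posnP n) => [->|n0]; first exact: cg_ppow0.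
  apply: cg_trans (_ : cg _ _ (l n ^+ r n.+1)) _.
    by apply: cg_exp; exact: coh_cg.
  apply: pow_period => //; first exact: hl1.
  have hn : (n.-1 <= n)%N by exact: leq_pred.
  apply: cg_trans (cg_le (leq_trans hn (leqnSn n)) (hr n.+1)) _.
  apply: cg_trans (cg_le hn (coh_cg n hx)) _.
  exact: cg_le hn (cg_sym (hr n)).
move=> n; exists n => m hm; apply/cgP.
case: (posnP n) => [->|n0]; first exact: cg_ppow0.
apply: pow_period => //; first exact: hl1.
apply: cg_le (leq_pred n) _.
exact: cg_trans (proj1 (cgP _ _ _) hm) (cg_sym (hr n)).
Qed.

Lemma exists_binom p x k : prime p -> coherent p x -> exists c, IsBinom p x k c.
Proof.
move=> pp hx.
pose P := fun n y => cg (ppow p (n + k`!)) ((k`!)%:Z * y)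
   (\prod_(i < k) (x (n + k`!)%N - i%:Z)).
have hprod : forall N L, (L <= N)%N -> cg (ppow p L)
    (\prod_(i < k) (x N - i%:Z)) (\prod_(i < k) (x L - i%:Z)).
  move=> N L hLN.
  apply: (@cg_prod _ k (fun i => x N - i%:Z) (fun i => x L - i%:Z)) => i _.
  by apply: cg_sub; [exact: coh_le | exact: cg_refl].
have h1 : forall n, exists y, P n y.
  move=> n; set L := (n + k`!)%N.
  set t := absz (x L %% ppow p L)%Z.
  have ht : cg (ppow p L) t%:Z (x L) by apply/cgP; exact: nat_rep.
  exists ('C(t, k))%:Z; rewrite /P -/L.
  apply: cg_trans (_ : cg _ _ (\prod_(i < k) (t%:Z - i%:Z))) _.
    by rewrite prod_ffact -bin_ffact PoszM mulrC; exact: cg_refl.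
  apply: (@cg_prod _ k (fun i => t%:Z - i%:Z) (fun i => x L - i%:Z)) => i _.
  by apply: cg_sub; [exact: ht | exact: cg_refl].
have h2 : forall n y y', P n y -> P n.+1 y' -> cg (ppow p n) y' y.
  move=> n y y'; rewrite /P => hy hy'.
  have hle : (n + k`! <= n.+1 + k`!)%N by rewrite leq_add2r.
  have h3 := cg_trans (cg_le hle hy') (hprod _ _ hle).
  have h4 := cg_trans h3 (cg_sym hy).
  apply: (dvd_cancel_factz pp (fact_gt0 k)).
  by move: h4; rewrite /cg mulrBr.
have [c [hc hP]] := coh_choice h1 h2.
exists c; split => // n; apply/cgP.
have hle : (n <= n + k`!)%N by exact: leq_addr.
apply: cg_trans (cg_le hle (hP n)) _.
exact: hprod.
Qed.

Lemma exists_sum p (c : nat -> padic) : (forall k, coherent p (c k)) ->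
  (forall n k, (n <= k)%N -> cg (ppow p n) (c k n) 0) -> exists S, IsSum p c S.
Proof.
move=> hc h0.
have tail : forall n M, (n <= M)%N ->
    cg (ppow p n) (\sum_(k < M) c k n) (\sum_(k < n) c k n).
  move=> n; elim => [|M IH] hM.
    by rewrite leqn0 in hM; rewrite (eqP hM); exact: cg_refl.
  case: (ltngtP n M.+1) hM => // [hlt|->] _; last exact: cg_refl.
  rewrite big_ord_recr /=.
  apply: cg_trans (_ : cg _ _ (\sum_(k < n) c k n + 0)) _; last first.
    by rewrite addr0; exact: cg_refl.
  by apply: cg_add; [apply: IH; rewrite -ltnS | apply: h0; rewrite -ltnS].
exists (fun n => \sum_(k < n) c k n); split.
  move=> n; apply/cgP.
  apply: cg_trans (_ : cg _ _ (\sum_(k < n.+1) c k n)) _.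
    apply: (@cg_sum _ n.+1 (fun k => c k n.+1) (fun k => c k n)) => k _.
    exact: coh_cg.
  exact: tail.
move=> n; exists n => M hM; apply/cgP; exact: tail.
Qed.

Lemma exists_H p s a F : prime p -> odd p -> (p %| F)%N -> coherent p s ->
  coherent p a -> punit p a -> exists h, IsH p s a F h.
Proof.
move=> pp op pF hs ha hu.
have [w hw] := exists_teich pp ha hu.
have [hwc [hw1 hwa]] := hw.
have hw1u : ~~ (p%:Z %| w 1%N)%Z.
  exact: unit_cg (cg_sym (proj1 (cgP _ _ _) hwa)) hu.
have [l [hl hwl]] := coh_div pp hwc ha hw1u.
have hl1 : forall n, (0 < n)%N -> cg p%:Z (l n) 1.
  move=> n n0; rewrite -ppow1; apply: (@cg_cancel p 1 (w n)) => //.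
    exact: unit_at.
  rewrite mulr1; apply: cg_trans (_ : cg _ _ (a n)) _.
    by apply: cg_le (peq_cg n hwl).
  apply: cg_trans (coh_le ha n0) _.
  rewrite ppow1; apply: cg_trans (cg_sym (proj1 (cgP _ _ _) hwa)) _.
  by rewrite -ppow1; apply: cg_sym; exact: coh_le.
set x := psub (pconst 1) s.
have hx : coherent p x by apply: coh_sub => //; exact: coh_const.
have [u hup] := exists_pow pp hl hx hl1.
have [q [hq hqa]] := coh_div pp ha (coh_const p F%:Z) hu.
have hb : forall k, exists c, IsBinom p x k c.
  by move=> k; exact: exists_binom.
pose bin k := proj1_sig (constructive_indefinite_description _ (hb k)).
have hbin : forall k, IsBinom p x k (bin k).
  by move=> k; rewrite /bin; case: constructive_indefinite_description.
have he : forall k, exists e, IsRat p (euler k) e.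
  move=> k; apply: coh_div => //; try exact: coh_const.
  exact: euler_den_unit.
pose e k := proj1_sig (constructive_indefinite_description _ (he k)).
have her : forall k, IsRat p (euler k) (e k).
  by move=> k; rewrite /e; case: constructive_indefinite_description.
have hc1 : forall k, coherent p (pmul (pmul (bin k) (pexp q k)) (e k)).
  move=> k; apply: coh_mul; last exact: (her k).1.
  apply: coh_mul; first exact: (hbin k).1.
  exact: coh_exp.
have hc2 : forall n k, (n <= k)%N ->
    cg (ppow p n) (pmul (pmul (bin k) (pexp q k)) (e k) n) 0.
  move=> n k hnk; rewrite /pmul /pexp.
  apply: cg_dvd_mul0; exact: q_dvd pp pF ha hu hqa hnk.
have [S hS] := @exists_sum p (fun k => pmul (pmul (bin k) (pexp q k)) (e k)) hc1 hc2.
exists (pmul u S), l, u, q, S, bin, e.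
split; first by exists w.
split; first exact: hup.
split; first by [].
split; first exact: hbin.
split; first exact: her.
split; first exact: hS.
split; first by apply: coh_mul; [exact: hup.1 | exact: hS.1].
by move=> n.
Qed.

Lemma IsH_coh p s a F h : IsH p s a F h -> coherent p h.
Proof. by move=> [l [u [q [S [bin [e [_ [_ [_ [_ [_ [_ [hh _]]]]]]]]]]]]]. Qed.

Lemma IsH_peq p s a F h h2 : IsH p s a F h2 -> coherent p h -> peq p h h2 ->
  IsH p s a F h.
Proof.
move=> [l [u [q [S [bin [e [h1 [h2' [h3 [h4 [h5 [h6 [hh hhu]]]]]]]]]]]]] hc hp.
exists l, u, q, S, bin, e; do 7 (split => //).
move=> n; apply/cgP; exact: cg_trans (peq_cg n hp) (peq_cg n hhu).
Qed.


End Helpers.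
Import Helpers.

Theorem proposition3p10 (p F : nat) (s a : padic) :
  prime p -> odd p -> (0 < F)%N -> (p %| F)%N ->
  coherent p s -> coherent p a -> punit p a ->
  (exists h, IsH p s a F h /\ IsH p s (psub (pconst F%:Z) a) F h) /\
  (forall h1 h2, IsH p s a F h1 -> IsH p s (psub (pconst F%:Z) a) F h2 ->
     peq p h1 h2).
Proof.
move=> pp op F0 pF hs ha hu; split; last first.
  by move=> h1 h2; apply: H_uniq.
have [h hH] := exists_H pp op pF hs ha hu.
have ha2 : coherent p (psub (pconst F%:Z) a) by apply: coh_sub => //; exact: coh_const.
have [h2 hH2] := exists_H pp op pF hs ha2 (punit_sub pp pF hu).
exists h; split => //.
exact: (IsH_peq hH2 (IsH_coh hH) (H_uniq pp op pF hs ha hu hH hH2)).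
Qed.
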